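(* Let $\mathcal{H}$ be an $n$-dimensional (real or complex) Hilbert space, let $F=\{f_i\}_{i=1}^N$ be a tight frame for $\mathcal{H}$, and let $\{q_i\}_{i=1}^N$ be the weight number sequence associated with a probability sequence $\{p_i\}_{i=1}^N$. Then the canonical dual $S_F^{-1}F$ is a 1-erasure probabilistic optimal dual (POD) of $F$ if and only if $S_F^{-1}F\in\Delta_F^{(1)}$.
   Context: A finite sequence $F=\{f_i\}_{i=1}^N$ in $\mathcal{H}$ is a frame if there are $A,B>0$ with $A\|f\|^2\le\sum_{i=1}^N|\langle f,f_i\rangle|^2\le B\|f\|^2$ for all $f$; it is tight if one can take $A=B$. The frame operator is $S_Ff=\sum_{i=1}^N\langle f,f_i\rangle f_i$ and the canonical dual is $S_F^{-1}F=\{S_F^{-1}f_i\}_{i=1}^N$. A frame $G=\{g_i\}_{i=1}^N$ is a dual of $F$ if $f=\sum_i\langle f,f_i\rangle g_i=\sum_i\langle f,g_i\rangle f_i$ for all $f$. A probability sequence is $\{p_i\}_{i=1}^N$ with $0\le p_i\le1$, $\sum p_i=1$; weight numbers $q_i=\frac{\sum_{j} p_j}{\sum_{j} p_j-p_i}\cdot\frac{N-1}{n}$. For $\Lambda\subseteq\{1,\dots,N\}$ the error operator is $E_{\Lambda,(F,G)}f=\sum_{i\in\Lambda}q_i\langle f,f_i\rangle g_i$. Set $\mathcal{O}_P^{(1)}(F,G)=\max_{|\Lambda|=1}\|E_{\Lambda,(F,G)}\|$ and $\mathcal{A}_P^{(1)}(F,G)=\max_{|\Lambda|=1}\frac{\|E_{\Lambda,(F,G)}\|+\rho(E_{\Lambda,(F,G)})}{2}$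 ($\rho$ = spectral radius). A dual $G$ of $F$ is a 1-erasure POD of $F$ if $\mathcal{O}_P^{(1)}(F,G)=\min\{\mathcal{O}_P^{(1)}(F,G'):G'\text{ a dual of }F\}$. $\Delta_F^{(1)}$ is the set of duals $G$ of $F$ minimizing $\mathcal{A}_P^{(1)}(F,G)$ over all duals of $F$ (1-erasure PASOD-frames). *)

(* Defs.v *)
From HB Require Import structures.
From mathcomp Require Import all_boot all_order all_algebra.
From mathcomp Require Import classical_sets boolp reals.
From mathcomp Require Import complex.
Set Implicit Arguments. Unset Strict Implicit. Unset Printing Implicit Defensive.
Import Order.TTheory GRing.Theory Num.Theory.
Local Open Scope ring_scope.
Local Open Scope classical_set_scope.

(* The Hilbert space H is modelled as K^n with K = R (if [isreal]) or
   K = C := R[i], both embedded in C^n = 'cV[R[i]]_n with the standard inner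
   product <x, y> = \sum_k x_k * conj(y_k) (linear in the first slot). *)

Section FrameDefs.
Variable R : realType.
Local Notation C := (R[i]).
Variables (isreal : bool) (n N : nat).

Definition conjv (x : 'cV[C]_n) : 'cV[C]_n := map_mx (@conjc R) x.

Definition inH (x : 'cV[C]_n) : Prop :=
  if isreal then forall k, x k 0 \is Num.real else True.

Definition inner (x y : 'cV[C]_n) : C := \sum_k x k 0 * (y k 0)^*%C.

Definition vnorm (x : 'cV[C]_n) : R := Num.sqrt (complex.Re (inner x x)).

Definition opnorm (A : 'M[C]_n) : R :=
  sup [set vnorm (A *m x) | x in [set x | inH x /\ vnorm x = 1]].

Definition specrad (A : 'M[C]_n) : R :=
  sup [set complex.Re `|l| | l in [set l : C | eigenvalue A l]].

Definition seqH (F : 'I_N -> 'cV[C]_n) : Prop := forall i, inH (F i).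

Definition frame_sum (F : 'I_N -> 'cV[C]_n) (f : 'cV[C]_n) : R :=
  \sum_i complex.Re (`|inner f (F i)| ^+ 2).

Definition is_frame (F : 'I_N -> 'cV[C]_n) : Prop :=
  seqH F /\
  exists A B : R, 0 < A /\ 0 < B /\
    forall f, inH f -> A * vnorm f ^+ 2 <= frame_sum F f <= B * vnorm f ^+ 2.

Definition is_tight_frame (F : 'I_N -> 'cV[C]_n) : Prop :=
  seqH F /\
  exists A : R, 0 < A /\ forall f, inH f -> frame_sum F f = A * vnorm f ^+ 2.

(* frame operator S_F f = \sum_i <f, f_i> f_i *)
Definition frame_op (F : 'I_N -> 'cV[C]_n) : 'M[C]_n :=
  \sum_i (F i *m (conjv (F i))^T).

Definition canon_dual (F : 'I_N -> 'cV[C]_n) : 'I_N -> 'cV[C]_n :=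
  fun i => invmx (frame_op F) *m F i.

Definition is_dual (F G : 'I_N -> 'cV[C]_n) : Prop :=
  is_frame G /\
  forall f, inH f ->
    f = \sum_i inner f (F i) *: G i /\ f = \sum_i inner f (G i) *: F i.

Definition prob_seq (p : 'I_N -> R) : Prop :=
  (forall i, 0 <= p i <= 1) /\ \sum_i p i = 1.

Definition weight (p : 'I_N -> R) (i : 'I_N) : R :=
  (\sum_j p j) / (\sum_j p j - p i) * ((N.-1)%:R / n%:R).

(* error operator E_{Lambda,(F,G)} f = sum_{i in Lambda} q_i <f,f_i> g_i *)
Definition err_op (p : 'I_N -> R) (L : {set 'I_N}) (F G : 'I_N -> 'cV[C]_n)
  : 'M[C]_n :=
  \sum_(i in L) (((weight p i)%:C)%C *: (G i *m (conjv (F i))^T)).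

Definition O1 (p : 'I_N -> R) (F G : 'I_N -> 'cV[C]_n) : R :=
  sup [set opnorm (err_op p L F G) | L in [set L : {set 'I_N} | #|L| = 1%N]].

Definition A1 (p : 'I_N -> R) (F G : 'I_N -> 'cV[C]_n) : R :=
  sup [set (opnorm (err_op p L F G) + specrad (err_op p L F G)) / 2
      | L in [set L : {set 'I_N} | #|L| = 1%N]].

Definition is_POD1 (p : 'I_N -> R) (F G : 'I_N -> 'cV[C]_n) : Prop :=
  is_dual F G /\ forall G', is_dual F G' -> O1 p F G <= O1 p F G'.

Definition in_Delta1 (p : 'I_N -> R) (F G : 'I_N -> 'cV[C]_n) : Prop :=
  is_dual F G /\ forall G', is_dual F G' -> A1 p F G <= A1 p F G'.

End FrameDefs.

(* Main.v *)
Require Import Defs.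
Set Warnings "-notation-overridden,-ambiguous-paths".
Require Import Defs.
From HB Require Import structures.
From mathcomp Require Import all_boot all_order all_algebra.
From mathcomp Require Import classical_sets boolp reals.
From mathcomp Require Import complex.
From mathcomp Require Import ring lra.
Set Implicit Arguments. Unset Strict Implicit. Unset Printing Implicit Defensive.
Import Order.TTheory GRing.Theory Num.Theory.
Local Open Scope ring_scope.

Section Inner.
Variable R : realType.
Local Notation C := (R[i]).
Variable n : nat.
Implicit Types (x y z : 'cV[C]_n) (a b : C).

Lemma innerDl x y z : inner (x + y) z = inner x z + inner y z.
Proof. by rewrite /inner -big_split; apply: eq_bigr => k _; rewrite mxE mulrDl. Qed.

Lemma innerZl a x z : inner (a *: x) z = a * inner x z.
Proof. by rewrite /inner mulr_sumr; apply: eq_bigr => k _; rewrite mxE mulrA. Qed.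

Lemma innerC x y : inner y x = (inner x y)^*%C.
Proof.
rewrite /inner rmorph_sum; apply: eq_bigr => k _.
by rewrite rmorphM /= conjcK mulrC.
Qed.

Lemma innerDr x y z : inner z (x + y) = inner z x + inner z y.
Proof. by rewrite innerC innerDl rmorphD /= -!innerC. Qed.

Lemma innerZr a x z : inner z (a *: x) = a^*%C * inner z x.
Proof. by rewrite innerC innerZl rmorphM /= -innerC. Qed.

Lemma innerNl x z : inner (- x) z = - inner x z.
Proof. by rewrite -scaleN1r innerZl mulN1r. Qed.

Lemma innerNr x z : inner z (- x) = - inner z x.
Proof. by rewrite innerC innerNl rmorphN /= -innerC. Qed.

Lemma inner0l z : inner 0 z = 0.
Proof. by rewrite -(scale0r 0) innerZl mul0r. Qed.

Lemma inner0r z : inner z 0 = 0.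
Proof. by rewrite innerC inner0l conjc0. Qed.

Lemma inner_ge0 x : 0 <= inner x x.
Proof. by apply: sumr_ge0 => k _; apply: mulcJ_ge0. Qed.

Lemma inner_conj x : (inner x x)^*%C = inner x x.
Proof. by rewrite -innerC. Qed.

Lemma inner_eq0 x : inner x x = 0 -> x = 0.
Proof.
move=> /eqP; rewrite psumr_eq0; last by move=> k _; apply: mulcJ_ge0.
move=> /allP H; apply/matrixP => k j; rewrite (ord1 j) mxE.
have := H k (mem_index_enum k); rewrite -sqr_normc sqrf_eq0 normr_eq0.
by move/eqP.
Qed.

Lemma vnorm_ge0 x : 0 <= vnorm x.
Proof. exact: sqrtr_ge0. Qed.

Lemma Re_inner_ge0 x : 0 <= complex.Re (inner x x).
Proof. by have := inner_ge0 x; rewrite lecE => /andP[]. Qed.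

Lemma vnormE x : ((vnorm x) ^+ 2)%:C%C = inner x x.
Proof.
rewrite /vnorm sqr_sqrtr ?Re_inner_ge0 // RRe_real //.
exact: ger0_real (inner_ge0 x).
Qed.

Lemma vnorm2 x : (vnorm x) ^+ 2 = complex.Re (inner x x).
Proof. by rewrite -vnormE. Qed.

End Inner.

Section NR.
Variable R : realType.
Local Notation C := (R[i]).
Lemma rcM (a b : R) : (a * b)%:C%C = a%:C%C * b%:C%C.
Proof. exact: rmorphM. Qed.
Lemma rcX (a : R) k : (a ^+ k)%:C%C = (a%:C%C) ^+ k.
Proof. exact: rmorphXn. Qed.
Lemma rcD (a b : R) : (a + b)%:C%C = a%:C%C + b%:C%C.
Proof. exact: rmorphD. Qed.
Lemma rcB (a b : R) : (a - b)%:C%C = a%:C%C - b%:C%C.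
Proof. exact: rmorphB. Qed.
Definition nr (z : C) : R := complex.Re `|z|.

Lemma nrE z : (nr z)%:C%C = `|z|.
Proof. by rewrite /nr RRe_real // normr_real. Qed.

Lemma nr_ge0 z : 0 <= nr z.
Proof. by have := normr_ge0 z; rewrite lecE => /andP[]. Qed.

Lemma nrM x y : nr (x * y) = nr x * nr y.
Proof. by apply: complexI; rewrite rcM !nrE normrM. Qed.

Lemma nr_real (r : R) : 0 <= r -> nr r%:C%C = r.
Proof. by move=> r0; apply: complexI; rewrite nrE ger0_norm // lecR. Qed.

Lemma nr2 z : ((nr z) ^+ 2)%:C%C = z * z^*%C.
Proof. by rewrite rcX nrE sqr_normc. Qed.

Lemma Re_le_nr z : complex.Re z <= nr z.
Proof.
have := normc_ge_Re z; rewrite -nrE lecR => H.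
exact: le_trans (ler_norm _) H.
Qed.

Lemma nr0 : nr 0 = 0.
Proof. by rewrite /nr normr0. Qed.

Lemma nr_eq0 z : (nr z == 0) = (z == 0).
Proof.
apply/eqP/eqP => [h|->]; last exact: nr0.
by apply/eqP; rewrite -normr_eq0 -nrE h rmorph0.
Qed.

Lemma nrJ z : nr z^*%C = nr z.
Proof. by rewrite /nr normcJ. Qed.
End NR.

Section CS.
Variable R : realType.
Local Notation C := (R[i]).
Variable n : nat.
Implicit Types (x y z : 'cV[C]_n) (a b : C).

Lemma CS_C x y : inner x y * (inner x y)^*%C <= inner x x * inner y y.
Proof.
set a := inner x x; set b := inner y y; set v := inner x y.
have [b0|bn0] := eqVneq b 0.
  have y0 : y = 0 by apply: inner_eq0.
  by rewrite /v y0 inner0r mul0r b0 mulr0.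
have bp : 0 < b by rewrite lt_def bn0 inner_ge0.
set w := b *: x - v *: y.
have Hw : inner w w = b * (a * b - v * v^*%C).
  rewrite /w !innerDl !innerDr !innerNl !innerNr !innerZl !innerZr.
  rewrite -/a -/b -/v (innerC x y) -/v /b inner_conj -/b; ring.
have := inner_ge0 w; rewrite Hw pmulr_rge0 // subr_ge0.
by rewrite mulrC.
Qed.

Lemma CS x y : nr (inner x y) <= vnorm x * vnorm y.
Proof.
rewrite -(@ler_pXn2r _ 2) //; last 2 first.
- by rewrite nnegrE nr_ge0.
- by rewrite nnegrE mulr_ge0 ?vnorm_ge0.
rewrite -lecR nr2 exprMn rcM !vnormE; exact: CS_C.
Qed.

Lemma vnormZ a x : vnorm (a *: x) = nr a * vnorm x.
Proof.
apply/eqP; rewrite -(@eqrXn2 _ 2) //; last 2 first.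
- exact: vnorm_ge0.
- by rewrite mulr_ge0 ?nr_ge0 ?vnorm_ge0.
apply/eqP; apply: complexI; rewrite [LHS]vnormE exprMn rcM vnormE nr2.
by rewrite innerZl innerZr mulrA mulrC mulrA.
Qed.

Lemma vnorm0 : vnorm (0 : 'cV[C]_n) = 0.
Proof. by rewrite -(scale0r 0) vnormZ nr0 mul0r. Qed.

Lemma vnorm_eq0 x : vnorm x = 0 -> x = 0.
Proof.
move=> h; apply: inner_eq0; rewrite -vnormE h expr0n /=.
by [].
Qed.
End CS.

Local Open Scope classical_set_scope.
Section Sup.
Variable R : realType.

Lemma sup_ge0' (E : set R) : (forall x, E x -> 0 <= x) -> 0 <= sup E.
Proof.
move=> H; case: (pselect (has_sup E)) => [hs|nh]; last by rewrite sup_out.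
have [[x Ex] _] := hs.
exact: le_trans (H x Ex) (sup_upper_bound hs Ex).
Qed.

Lemma sup_le' (E : set R) c : 0 <= c -> (forall x, E x -> x <= c) -> sup E <= c.
Proof.
move=> c0 H; case: (pselect (E !=set0)) => [ne|e]; first by apply: ge_sup.
by rewrite sup_out // => -[].
Qed.

Lemma sup_ge' (E : set R) x : has_ubound E -> E x -> x <= sup E.
Proof. by move=> ub Ex; apply: sup_upper_bound => //; split => //; exists x. Qed.

Variable N : nat.
Implicit Types h : {set 'I_N} -> R.

Definition SS h := [set h L | L in [set L : {set 'I_N} | #|L| = 1%N]].

Lemma SS_elem h y : SS h y -> exists i, y = h [set i]%SET.
Proof.
move=> [L /= /eqP /cards1P [i ->] <-]; by exists i.
Qed.

Lemma SS_in h i : SS h (h [set i]%SET).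
Proof. by exists [set i]%SET => //=; rewrite cards1. Qed.

Lemma SS_ub h : has_ubound (SS h).
Proof.
exists (\big[Num.max/0]_i h [set i]%SET) => y /SS_elem [i ->].
exact: (le_bigmax 0 (fun i => h [set i]%SET) i).
Qed.

Lemma SS_ge h i : h [set i]%SET <= sup (SS h).
Proof. apply: sup_ge' (SS_ub h) (SS_in h i). Qed.

Lemma SS_le h c : 0 <= c -> (forall i, h [set i]%SET <= c) -> sup (SS h) <= c.
Proof. by move=> c0 H; apply: sup_le' => // y /SS_elem [i ->]. Qed.

Lemma SS_ge0 h : (forall i, 0 <= h [set i]%SET) -> 0 <= sup (SS h).
Proof. by move=> H; apply: sup_ge0' => y /SS_elem [i ->]. Qed.

Lemma SS_lt h M : 0 < M -> (forall i, h [set i]%SET < M) -> sup (SS h) < M.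
Proof.
move=> M0 H.
have c0 : 0 <= \big[Num.max/0]_i h [set i]%SET.
  by elim/big_rec: _ => // i y _ y0; rewrite le_max y0 orbT.
apply: le_lt_trans (SS_le c0 _) _.
- move=> i; exact: (le_bigmax 0 (fun i => h [set i]%SET) i).
- by apply: bigmax_lt.
Qed.
End Sup.

Section RankOne.
Variable R : realType.
Local Notation C := (R[i]).
Variable n : nat.
Implicit Types (x y f g : 'cV[C]_n) (c : C).

Lemma trconj_mul f x : (conjv f)^T *m x = (inner x f)%:M.
Proof.
apply/matrixP => i j; rewrite (ord1 i) (ord1 j) !mxE /= mulr1n.
by apply: eq_bigr => k _; rewrite !mxE mulrC.
Qed.

Lemma rk_mul c g f x : (c *: (g *m (conjv f)^T)) *m x = (c * inner x f) *: g.
Proof.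
by rewrite -scalemxAl -mulmxA trconj_mul mul_mx_scalar scalerA.
Qed.

Lemma rk_lmul c g f : (conjv f)^T *m (c *: (g *m (conjv f)^T))
   = (c * inner g f) *: (conjv f)^T.
Proof.
by rewrite -scalemxAr mulmxA trconj_mul mul_scalar_mx scalerA mulrC.
Qed.

Lemma rk_eig c g f l : eigenvalue (c *: (g *m (conjv f)^T)) l ->
  l = 0 \/ l = c * inner g f.
Proof.
move=> /eigenvalueP [v Hv vn0].
set s := (v *m g) 0 0.
have vg : v *m g = s%:M by apply: mx11_scalar.
have E1 : v *m (c *: (g *m (conjv f)^T)) = (c * s) *: (conjv f)^T.
  by rewrite -scalemxAr mulmxA vg mul_scalar_mx scalerA.
have E2 : (v *m (c *: (g *m (conjv f)^T))) *m g = (l * s)%:M.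
  by rewrite Hv -scalemxAl vg scale_scalar_mx.
move: E2; rewrite E1 -scalemxAl trconj_mul scale_scalar_mx => /matrixP /(_ 0 0).
rewrite !mxE /= !mulr1n => E3.
have [s0|sn0] := eqVneq s 0.
  left; move: Hv; rewrite E1 s0 mulr0 scale0r => /esym /eqP.
  by rewrite scaler_eq0 (negPf vn0) orbF => /eqP.
right; apply: (mulIf sn0); rewrite -E3; ring.
Qed.

Lemma specrad_ge0 (A : 'M[C]_n) : 0 <= specrad A.
Proof. by apply: sup_ge0' => y [l _ <-]; apply: nr_ge0. Qed.

Lemma specrad_elem c g f (y : R) :
  [set complex.Re `|l| | l in [set l : C | eigenvalue (c *: (g *m (conjv f)^T)) l]] y ->
  y <= nr (c * inner g f).
Proof.
move=> [l Hl <-]; have H := rk_eig Hl; rewrite -/(nr l).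
by case: H => ->; [rewrite nr0; apply: nr_ge0|exact: lexx].
Qed.

Lemma specrad_rk_le c g f : specrad (c *: (g *m (conjv f)^T)) <= nr (c * inner g f).
Proof. by apply: sup_le' => [|y]; [apply: nr_ge0|apply: specrad_elem]. Qed.

Lemma specrad_rk_ge c g f : nr (c * inner g f) <= specrad (c *: (g *m (conjv f)^T)).
Proof.
have [z0|zn0] := eqVneq (c * inner g f) 0.
  by rewrite z0 nr0; apply: specrad_ge0.
apply: sup_ge'.
  by exists (nr (c * inner g f)) => y; apply: specrad_elem.
exists (c * inner g f) => //=; apply/eigenvalueP; exists (conjv f)^T.
  exact: rk_lmul.
apply/eqP => f0; have := trconj_mul f g; rewrite f0 mul0mx.
move=> /matrixP /(_ 0 0); rewrite !mxE /= mulr1n => h.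
by rewrite -h mulr0 eqxx in zn0.
Qed.

Variable b : bool.

Lemma opnorm_ge0 (A : 'M[C]_n) : 0 <= opnorm b A.
Proof. by apply: sup_ge0' => y [x _ <-]; apply: vnorm_ge0. Qed.

Lemma opnorm_elem c g f (y : R) :
  [set vnorm ((c *: (g *m (conjv f)^T)) *m x) | x in [set x | inH b x /\ vnorm x = 1]] y ->
  y <= nr c * vnorm g * vnorm f.
Proof.
move=> [x [_ x1] <-]; rewrite rk_mul vnormZ nrM [X in _ <= X]mulrAC.
apply: ler_wpM2r; first exact: vnorm_ge0.
apply: ler_wpM2l; first exact: nr_ge0.
by have := CS x f; rewrite x1 mul1r.
Qed.

Lemma opnorm_rk_le c g f : opnorm b (c *: (g *m (conjv f)^T)) <= nr c * vnorm g * vnorm f.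
Proof.
apply: sup_le' => [|y]; last exact: opnorm_elem.
by rewrite !mulr_ge0 ?nr_ge0 ?vnorm_ge0.
Qed.

Lemma real_inH (r : R) x : inH b x -> inH b (r%:C%C *: x).
Proof.
rewrite /inH; case: b => // H k; rewrite mxE; apply: rpredM (H k).
by apply/complex_realP; exists r.
Qed.

Lemma opnorm_rk_ge c g f : inH b f ->
  nr c * vnorm g * vnorm f <= opnorm b (c *: (g *m (conjv f)^T)).
Proof.
move=> Hf.
have [f0|fn0] := eqVneq (vnorm f) 0.
  by rewrite f0 mulr0; apply: opnorm_ge0.
have fp : 0 < vnorm f by rewrite lt_def fn0 vnorm_ge0.
set r := (vnorm f)^-1.
have r0 : 0 <= r by rewrite invr_ge0 vnorm_ge0.
set x := r%:C%C *: f.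
have x1 : vnorm x = 1 by rewrite /x vnormZ nr_real // mulVf.
have ixf : inner x f = (vnorm f)%:C%C.
  rewrite /x innerZl -vnormE -rcM; congr (_%:C%C).
  by rewrite /r expr2 mulrA mulVf ?mul1r.
apply: sup_ge'.
  by exists (nr c * vnorm g * vnorm f) => y; apply: opnorm_elem.
exists x; first by split => //; apply: real_inH.
rewrite rk_mul vnormZ nrM ixf nr_real ?vnorm_ge0 //.
by rewrite mulrAC.
Qed.

End RankOne.

Section FrameOp.
Variable R : realType.
Local Notation C := (R[i]).

Lemma ReD (x y : C) : complex.Re (x + y) = complex.Re x + complex.Re y.
Proof. by case: x; case: y. Qed.
Lemma Re0 : complex.Re (0 : C) = 0.
Proof. by []. Qed.
Lemma Re_sum (I : Type) (r : seq I) (P : pred I) (E : I -> C) :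
  complex.Re (\sum_(i <- r | P i) E i) = \sum_(i <- r | P i) complex.Re (E i).
Proof. exact: (big_morph _ ReD Re0). Qed.
Variables (b : bool) (n N : nat).
Implicit Types (x y f g : 'cV[C]_n) (F G : 'I_N -> 'cV[C]_n).

Lemma inH_add x y : inH b x -> inH b y -> inH b (x + y).
Proof. by rewrite /inH; case: b => // hx hy k; rewrite mxE rpredD. Qed.

Lemma frame_op_mul F x : frame_op F *m x = \sum_i inner x (F i) *: F i.
Proof.
rewrite /frame_op mulmx_suml; apply: eq_bigr => i _.
by rewrite -mulmxA trconj_mul mul_mx_scalar.
Qed.

Lemma col_inner F f :
  let u := \col_i inner f (F i) in vnorm u ^+ 2 = frame_sum F f.
Proof.
move=> u; rewrite vnorm2 /inner /frame_sum Re_sum.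
by apply: eq_bigr => i _; rewrite /u mxE sqr_normc.
Qed.

End FrameOp.

Section Tight.
Variable R : realType.
Local Notation C := (R[i]).
Variables (b : bool) (n N : nat).
Implicit Types (x y f g : 'cV[C]_n) (F G : 'I_N -> 'cV[C]_n).

Lemma rcSum (I : Type) (r : seq I) (P : pred I) (E : I -> R) :
  (\sum_(i <- r | P i) E i)%:C%C = \sum_(i <- r | P i) (E i)%:C%C.
Proof. exact: rmorph_sum. Qed.

Lemma double0 (x : C) : x + x = 0 -> x = 0.
Proof.
by rewrite -mulr2n -mulr_natl => /eqP; rewrite mulf_eq0 pnatr_eq0 /= => /eqP.
Qed.

Lemma inner_suml (I : Type) (r : seq I) (P : pred I) (E : I -> 'cV[C]_n) z :
  inner (\sum_(i <- r | P i) E i) z = \sum_(i <- r | P i) inner (E i) z.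
Proof. exact: (big_morph _ (fun x y => innerDl x y z) (inner0l z)). Qed.

Lemma inner_frame F f : inner (frame_op F *m f) f = (frame_sum F f)%:C%C.
Proof.
rewrite frame_op_mul inner_suml /frame_sum rcSum; apply: eq_bigr => i _.
rewrite innerZl (innerC f (F i)) -sqr_normc RRe_real //.
by rewrite rpredX // normr_real.
Qed.

Lemma conj_i : ('i%C)^*%C = - 'i%C :> C.
Proof. by apply/eqP; rewrite eq_complex /= oppr0 !eqxx. Qed.

Lemma conj_realE (z : C) : z \is Num.real -> z^*%C = z.
Proof. by move/complex_realP => [r ->]; rewrite conjc_real. Qed.

Lemma tight_S F (A : R) : (forall i, inH b (F i)) ->
  (forall f, inH b f -> frame_sum F f = A * vnorm f ^+ 2) ->
  frame_op F = (A%:C%C)%:M.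
Proof.
move=> HF HA.
set M := frame_op F - (A%:C%C)%:M.
have HQ x : inH b x -> inner (M *m x) x = 0.
  move=> Hx; rewrite /M mulmxBl mul_scalar_mx innerDl innerNl innerZl.
  by rewrite inner_frame HA // rcM vnormE subrr.
have Hent j k : inner (M *m delta_mx k 0) (delta_mx j 0) = M j k.
  have d1 : (delta_mx j 0 : 'cV[C]_n) j 0 = 1 by rewrite mxE !eqxx.
  have d0 l : l != j -> (delta_mx j 0 : 'cV[C]_n) l 0 = 0.
    by move=> /negPf lj; rewrite mxE lj.
  rewrite -colE /inner (bigD1 j) //= big1 ?addr0.
    by rewrite d1 conjc1 mulr1 mxE.
  by move=> l lj; rewrite d0 // conjc0 mulr0.
have Hd j : inH b (delta_mx j 0 : 'cV[C]_n).
  by rewrite /inH; case: b => // k; rewrite mxE realn.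
have Hadd x y : inner (M *m (x + y)) (x + y) =
   inner (M *m x) x + inner (M *m y) y + inner (M *m x) y + inner (M *m y) x.
  rewrite mulmxDr !innerDl !innerDr; ring.
have Hsum j k : M k j + M j k = 0.
  have := HQ _ (inH_add (Hd j) (Hd k)).
  by rewrite Hadd !HQ // !Hent !add0r.
have Hsym j k : M j k = M k j.
  case Eb: b in HF Hd HQ.
    rewrite /M !mxE /frame_op !summxE; congr (_ - _); last by rewrite eq_sym.
    apply: eq_bigr => i _; rewrite !mxE !big_ord1 !mxE.
    have rj := HF i j; have rk := HF i k.
    by rewrite !conj_realE // mulrC.
  have Hx : inH false (delta_mx j 0 + 'i%C *: delta_mx k 0 : 'cV[C]_n) by [].
  have Mdiag l : M l l = 0 by apply: double0; apply: Hsum.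
  have := HQ _ Hx; rewrite Hadd -scalemxAr !innerZl !innerZr !Hent !Mdiag conj_i.
  rewrite !mulr0 !addr0 add0r => H.
  have : 'i%C * (M j k - M k j) = 0 by rewrite -H; ring.
  move/eqP; rewrite mulf_eq0 => /orP [/eqP|/eqP /subr0_eq //].
  by move=> /eqP; rewrite eq_complex /= oner_eq0 andbF.
apply/subr0_eq/matrixP => j k; rewrite [RHS]mxE.
by apply: double0; rewrite -{1}Hsym Hsum.
Qed.

End Tight.

Section Dual.
Variable R : realType.
Local Notation C := (R[i]).
Variables (b : bool) (n N : nat).
Implicit Types (x y f g : 'cV[C]_n) (F G : 'I_N -> 'cV[C]_n).

Lemma rcV (a : R) : (a^-1)%:C%C = (a%:C%C)^-1.
Proof. exact: fmorphV. Qed.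

Lemma Re_rc (a : R) : complex.Re (a%:C%C) = a.
Proof. by []. Qed.

Lemma Re_norm2 (z : C) : complex.Re (`|z| ^+ 2) = nr z ^+ 2.
Proof. by rewrite -nrE -rcX. Qed.

Lemma canonE F (A : R) : A != 0 -> (forall i, inH b (F i)) ->
  (forall f, inH b f -> frame_sum F f = A * vnorm f ^+ 2) ->
  forall i, canon_dual F i = (A^-1)%:C%C *: F i.
Proof.
move=> A0 HF HA i; rewrite /canon_dual (tight_S HF HA) invmx_scalar mul_scalar_mx.
by rewrite rcV.
Qed.

Lemma fs_ge0 G f : 0 <= frame_sum G f.
Proof. by apply: sumr_ge0 => i _; rewrite Re_norm2 sqr_ge0. Qed.

Lemma frame_of_recon F G (A : R) : 0 < A -> (forall i, inH b (G i)) ->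
  (forall f, inH b f -> frame_sum F f = A * vnorm f ^+ 2) ->
  (forall f, inH b f -> f = \sum_i inner f (F i) *: G i) -> is_frame b G.
Proof.
move=> A0 HG HA Hrec; split => //.
exists A^-1, (\sum_i vnorm (G i) ^+ 2 + 1); split; first by rewrite invr_gt0.
split.
  by apply: ltr_wpDl; [apply: sumr_ge0 => i _; apply: sqr_ge0|apply: ltr01].
move=> f Hf; apply/andP; split; last first.
  rewrite /frame_sum mulrDl mul1r mulr_suml.
  apply: ler_wpDr; first by rewrite sqr_ge0.
  apply: ler_sum => i _; rewrite Re_norm2 mulrC -exprMn.
  rewrite ler_pXn2r ?nnegrE ?nr_ge0 ?mulr_ge0 ?vnorm_ge0 //.
  exact: CS.
set u := \col_i inner f (F i); set w := \col_i inner f (G i).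
have Hu : vnorm u ^+ 2 = A * vnorm f ^+ 2 by rewrite col_inner HA.
have Hw : vnorm w ^+ 2 = frame_sum G f by rewrite col_inner.
have Huw : inner f f = inner u w.
  rewrite {1}(Hrec f Hf) inner_suml [RHS]/inner /u /w; apply: eq_bigr => i _.
  by rewrite innerZl !mxE (innerC f (G i)).
have Hff : vnorm f ^+ 2 <= vnorm u * vnorm w.
  by rewrite -(nr_real (sqr_ge0 (vnorm f))) vnormE Huw CS.
rewrite -Hw.
have [f0|fn0] := eqVneq (vnorm f) 0.
  by rewrite f0 expr0n mulr0 sqr_ge0.
have fp : 0 < vnorm f ^+ 2 by rewrite exprn_gt0 // lt_def fn0 vnorm_ge0.
have H2 : (vnorm f ^+ 2) ^+ 2 <= A * vnorm f ^+ 2 * vnorm w ^+ 2.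
  rewrite -Hu -exprMn ler_pXn2r ?nnegrE ?mulr_ge0 ?vnorm_ge0 ?sqr_ge0 //.
rewrite -(ler_pM2l A0) mulrA mulfV ?gt_eqF // mul1r -(ler_pM2r fp).
move: H2; rewrite -!expr2 => H2; nra.
Qed.

Lemma rc1 : (1 : R)%:C%C = 1.
Proof. exact: rmorph1. Qed.

Lemma dual_comb F G1 G2 (A : R) (t : R) : 0 < A ->
  (forall f, inH b f -> frame_sum F f = A * vnorm f ^+ 2) ->
  is_dual b F G1 -> is_dual b F G2 ->
  is_dual b F (fun i => (1 - t)%:C%C *: G1 i + t%:C%C *: G2 i).
Proof.
move=> A0 HA [[HG1 _] H1] [[HG2 _] H2].
have Hrec f : inH b f ->
  f = \sum_i inner f (F i) *: ((1 - t)%:C%C *: G1 i + t%:C%C *: G2 i) /\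
  f = \sum_i inner f ((1 - t)%:C%C *: G1 i + t%:C%C *: G2 i) *: F i.
  move=> Hf; have [E1 E1'] := H1 f Hf; have [E2 E2'] := H2 f Hf.
  have Hf2 : f = (1 - t)%:C%C *: f + t%:C%C *: f.
    by rewrite -scalerDl -rcD subrK rc1 scale1r.
  split.
    transitivity ((1 - t)%:C%C *: (\sum_i inner f (F i) *: G1 i) +
                  t%:C%C *: (\sum_i inner f (F i) *: G2 i)).
      by rewrite -E1 -E2.
    rewrite !scaler_sumr -big_split; apply: eq_bigr => i _.
    by rewrite scalerDr !scalerA (mulrC (1 - t)%:C%C) (mulrC t%:C%C).
  transitivity ((1 - t)%:C%C *: (\sum_i inner f (G1 i) *: F i) +
                t%:C%C *: (\sum_i inner f (G2 i) *: F i)).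
    by rewrite -E1' -E2'.
  rewrite !scaler_sumr -big_split; apply: eq_bigr => i _.
  by rewrite innerDr !innerZr !conjc_real scalerDl !scalerA.
split; last by move=> f Hf; apply: Hrec.
apply: (frame_of_recon (F := F) A0) => //.
- by move=> i; apply: inH_add; apply: real_inH.
- by move=> f Hf; case: (Hrec f Hf).
Qed.

End Dual.

Section Pert.
Variable R : realType.
Local Notation C := (R[i]).
Variable n : nat.

Lemma rcn k : (k%:R : R)%:C%C = k%:R.
Proof. exact: rmorph_nat. Qed.

Lemma rcN (x : R) : (- x)%:C%C = - x%:C%C.
Proof. exact: rmorphN. Qed.

Lemma ReJ' (z : C) : (complex.Re z)%:C%C = (z + z^*%C) / 2%:R.
Proof. exact: ReJ_add. Qed.

Lemma pert_identity (f g' : 'cV[C]_n) (a q t : R) :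
  let g := a%:C%C *: f in let gt := (1 - t)%:C%C *: g + t%:C%C *: g' in
  let m := q * (a * vnorm f ^+ 2) in
  let s := q * complex.Re (inner g' f) - m in
  let K := q ^+ 2 * vnorm f ^+ 2 * vnorm (g' - g) ^+ 2 in
  (q * vnorm gt * vnorm f) ^+ 2 = m ^+ 2 + 2 * t * m * s + t ^+ 2 * K.
Proof.
move=> g gt m s K; rewrite /K /s /m.
rewrite (_ : (q * vnorm gt * vnorm f) ^+ 2 = q ^+ 2 * vnorm gt ^+ 2 * vnorm f ^+ 2);
  last by ring.
move: (vnormE f) (vnormE gt) (vnormE (g' - g)).
generalize (vnorm f ^+ 2) (vnorm gt ^+ 2) (vnorm (g' - g) ^+ 2).
move=> P Q D EP EQ ED.
apply: complexI; rewrite !(rcX, rcD, rcB, rcM, rcn) EP EQ ED ReJ'.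
rewrite /gt /g !innerDl !innerDr !innerNl !innerNr !innerZl !innerZr !conjc_real.
rewrite (innerC g' f) !(rcB, rc1, rcN, rcM) EP.
by field.
Qed.

End Pert.

Section Ineq.
Variable R : realType.

Lemma c_pos (m M s : R) : 0 <= m -> m <= M -> 0 < M -> m + s < M ->
  0 < 2 * (M - m) * M + 2 * m * (M - m - s).
Proof.
move=> m0 mM M0 msM.
have [mM'|mM'] := ltP m M.
  have h1 : 0 < (M - m) * M by rewrite mulr_gt0 // subr_gt0.
  have h2 : 0 <= m * (M - m - s) by rewrite mulr_ge0 //; lra.
  nra.
have -> : m = M by apply/eqP; rewrite eq_le mM mM'.
have h : 0 < M * (- s) by rewrite mulr_gt0 //; lra.
nra.
Qed.

Lemma pert_ineq (m M s K t : R) : 0 <= m -> m <= M -> 0 < M -> m + s < M ->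
  0 <= K -> 0 < t -> t <= 1/2 ->
  t * (K + 1) <= (2 * (M - m) * M + 2 * m * (M - m - s)) / 2 ->
  m ^+ 2 + 2 * t * m * s + t ^+ 2 * K < M ^+ 2.
Proof.
move=> m0 mM M0 msM K0 t0 t12 htc.
have cp := c_pos m0 mM M0 msM.
set c := 2 * (M - m) * M + 2 * m * (M - m - s) in htc cp *.
have e1 : 0 <= (M - m) * m * (1 - 2 * t).
  by rewrite !mulr_ge0 // subr_ge0 //; lra.
have e2 : 0 <= (M - m) * M * (1 - 2 * t).
  by rewrite !mulr_ge0 // ?subr_ge0 //; lra.
have e3 : 0 < t * (c - t * K).
  apply: mulr_gt0 => //; rewrite subr_gt0.
  have : t * K <= c / 2 - t by move: htc; rewrite mulrDr mulr1; lra.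
  move=> h; apply: le_lt_trans h _; lra.
rewrite /c in e3; nra.
Qed.

Lemma t_facts (S c K : R) : 0 <= S -> 0 < c -> 0 <= K -> 2 * (K + 1) / c <= S ->
  0 < (2 + S)^-1 /\ (2 + S)^-1 <= 1 / 2 /\ (2 + S)^-1 * (K + 1) <= c / 2.
Proof.
move=> S0 c0 K0 hv.
have D0 : 0 < 2 + S by lra.
have t0 : 0 < (2 + S)^-1 by rewrite invr_gt0.
have tD : (2 + S)^-1 * (2 + S) = 1 by rewrite mulVf // gt_eqF.
split => //; split.
  have : (2 + S)^-1 * 2 <= 1.
    rewrite -[X in _ <= X]tD; apply: ler_wpM2l; [exact: ltW|lra].
  lra.
have u : 2 * (K + 1) / c * c = 2 * (K + 1) by rewrite mulfVK // gt_eqF.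
move: hv u; set v := 2 * (K + 1) / c => hv u.
have h1 : v * c <= S * c by rewrite ler_pM2r.
have e1 : K + 1 <= c / 2 * (2 + S) by lra.
apply: le_trans (ler_wpM2l (ltW t0) e1) _.
by rewrite mulrCA tD mulr1.
Qed.

End Ineq.

Section Main.
Variable R : realType.
Local Notation C := (R[i]).
Variables (b : bool) (n N : nat) (F : 'I_N -> 'cV[C]_n) (p : 'I_N -> R).
Implicit Types (G : 'I_N -> 'cV[C]_n).

Local Notation q i := (weight n p i).

Lemma err_op_set1 G i :
  err_op p [set i]%SET F G = (q i)%:C%C *: (G i *m (conjv (F i))^T).
Proof. by rewrite /err_op big_set1. Qed.

Lemma O1E G : O1 b p F G = sup (SS (fun L => opnorm b (err_op p L F G))).
Proof. by []. Qed.

Lemma A1E G : A1 b p F G =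
  sup (SS (fun L => (opnorm b (err_op p L F G) + specrad (err_op p L F G)) / 2)).
Proof. by []. Qed.

Hypothesis Hq : forall i, 0 <= q i.
Hypothesis HF : forall i, inH b (F i).

Lemma O1_ge0 G : 0 <= O1 b p F G.
Proof. by rewrite O1E; apply: SS_ge0 => i; apply: opnorm_ge0. Qed.

Lemma A1_ge0 G : 0 <= A1 b p F G.
Proof.
rewrite A1E; apply: SS_ge0 => i.
by apply: divr_ge0 => //; apply: addr_ge0; [apply: opnorm_ge0|apply: specrad_ge0].
Qed.

Lemma O1_le G c : 0 <= c ->
  (forall i, q i * vnorm (G i) * vnorm (F i) <= c) -> O1 b p F G <= c.
Proof.
move=> c0 H; rewrite O1E; apply: SS_le => // i; rewrite err_op_set1.
by apply: le_trans (opnorm_rk_le _ _ _ _) _; rewrite nr_real.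
Qed.

Lemma O1_lt G M : 0 < M ->
  (forall i, q i * vnorm (G i) * vnorm (F i) < M) -> O1 b p F G < M.
Proof.
move=> M0 H; rewrite O1E; apply: SS_lt => // i; rewrite err_op_set1.
by apply: le_lt_trans (opnorm_rk_le _ _ _ _) _; rewrite nr_real.
Qed.

Lemma A1_le_O1 G : A1 b p F G <= O1 b p F G.
Proof.
rewrite A1E; apply: SS_le; first exact: O1_ge0.
move=> i; rewrite err_op_set1.
set E := _ *: _.
have h1 : specrad E <= opnorm b E.
  apply: le_trans (specrad_rk_le _ _ _) _.
  rewrite /E; apply: (le_trans _ (opnorm_rk_ge _ _ (HF i))).
  by rewrite nrM -mulrA; apply: ler_wpM2l; [apply: nr_ge0|apply: CS].
have h2 : opnorm b E <= O1 b p F G.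
  by rewrite O1E; have := SS_ge (fun L => opnorm b (err_op p L F G)) i; rewrite err_op_set1.
lra.
Qed.

Lemma A1_ge G i :
  (q i * vnorm (G i) * vnorm (F i) + q i * nr (inner (G i) (F i))) / 2 <= A1 b p F G.
Proof.
rewrite A1E.
have := SS_ge (fun L => (opnorm b (err_op p L F G) + specrad (err_op p L F G)) / 2) i.
rewrite /= err_op_set1; apply: le_trans.
apply: ler_wpM2r; first by rewrite invr_ge0.
apply: lerD.
  by have := opnorm_rk_ge (q i)%:C%C (G i) (HF i); rewrite nr_real.
by have := specrad_rk_ge (q i)%:C%C (G i) (F i); rewrite nrM nr_real.
Qed.

End Main.

Unset Implicit Arguments.
Local Close Scope classical_set_scope.

Theorem theorem3p4 (R : realType) (isreal : bool) (n N : nat)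
  (F : 'I_N -> 'cV[R[i]]_n) (p : 'I_N -> R) :
  (0 < n)%N ->
  is_tight_frame isreal F ->
  prob_seq p ->
  (forall i, p i < 1) ->
  (is_POD1 isreal p F (canon_dual F) <-> in_Delta1 isreal p F (canon_dual F)).
Proof.
move=> _ [HF [A [A0 HA]]] [Hp Hsum] Hp1.
have Hq i : 0 <= weight n p i.
  rewrite /weight Hsum; apply: mulr_ge0.
    by apply: divr_ge0 => //; rewrite subr_ge0; apply: ltW.
  by apply: divr_ge0; apply: ler0n.
set a := A^-1.
have a0 : 0 < a by rewrite invr_gt0.
have Hcan := canonE (lt0r_neq0 A0) HF HA.
set g := canon_dual F.
pose m i := weight n p i * (a * vnorm (F i) ^+ 2).
have Hm0 i : 0 <= m i by apply: mulr_ge0 (Hq i) (mulr_ge0 (ltW a0) (sqr_ge0 _)).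
have vg i : vnorm (g i) = a * vnorm (F i).
  by rewrite /g Hcan vnormZ nr_real // (ltW a0).
have ig i : nr (inner (g i) (F i)) = a * vnorm (F i) ^+ 2.
  rewrite /g Hcan innerZl -vnormE -rcM nr_real //.
  exact: mulr_ge0 (ltW a0) (sqr_ge0 _).
have Hm_le i : m i <= A1 isreal p F g.
  apply: le_trans (A1_ge Hq HF g i); rewrite vg ig /m.
  rewrite (_ : weight n p i * (a * vnorm (F i)) * vnorm (F i) =
               weight n p i * (a * vnorm (F i) ^+ 2)); last by rewrite expr2 !mulrA.
  lra.
have HO_can : O1 isreal p F g <= A1 isreal p F g.
  apply: (O1_le _ Hq); first exact: A1_ge0.
  by move=> i; rewrite vg; apply: le_trans (Hm_le i); rewrite /m expr2 !mulrA.
split.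
- move=> [Hd HP]; split; first exact: Hd.
  move=> G' HG'.
  set M := A1 isreal p F g.
  have [M0|Mp] := leP M 0.
    exact: le_trans M0 (A1_ge0 _ _ _ _).
  rewrite leNgt; apply/negP => HM.
  pose s i := weight n p i * complex.Re (inner (G' i) (F i)) - m i.
  pose K i := weight n p i ^+ 2 * vnorm (F i) ^+ 2 * vnorm (G' i - g i) ^+ 2.
  pose c i := 2 * (M - m i) * M + 2 * m i * (M - m i - s i).
  have Hms i : m i + s i < M.
    rewrite /s addrC subrK.
    apply: le_lt_trans HM; apply: le_trans (A1_ge Hq HF G' i).
    have h1 := Re_le_nr (inner (G' i) (F i)).
    have h2 := CS (G' i) (F i).
    have h3 := Hq i.
    have h4 : weight n p i * complex.Re (inner (G' i) (F i))
              <= weight n p i * nr (inner (G' i) (F i)) by apply: ler_wpM2l.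
    have h5 : weight n p i * nr (inner (G' i) (F i))
              <= weight n p i * (vnorm (G' i) * vnorm (F i)) by apply: ler_wpM2l.
    rewrite -mulrA; lra.
  have Hc i : 0 < c i by exact: c_pos (Hm0 i) (Hm_le i) Mp (Hms i).
  have HK i : 0 <= K i by apply: mulr_ge0; [apply: mulr_ge0|]; apply: sqr_ge0.
  pose S := \sum_i 2 * (K i + 1) / c i.
  have Sge i : 2 * (K i + 1) / c i <= S.
    rewrite /S (bigD1 i) //= lerDl; apply: sumr_ge0 => j _.
    exact: divr_ge0 (mulr_ge0 (ler0n _ 2) (addr_ge0 (HK j) ler01)) (ltW (Hc j)).
  have S0 : 0 <= S.
    apply: sumr_ge0 => j _.
    exact: divr_ge0 (mulr_ge0 (ler0n _ 2) (addr_ge0 (HK j) ler01)) (ltW (Hc j)).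
  pose t := (2 + S)^-1.
  have tF i := t_facts S0 (Hc i) (HK i) (Sge i).
  have D0 : 0 < 2 + S by apply: (@lt_le_trans _ _ 2); [|rewrite lerDl].
  have t0 : 0 < t by rewrite invr_gt0.
  pose Gt i := (1 - t)%:C%C *: g i + t%:C%C *: G' i.
  have HGt : is_dual isreal F Gt by apply: dual_comb A0 HA Hd HG'.
  have h1 := HP Gt HGt.
  have h2 : M <= O1 isreal p F g by apply: A1_le_O1.
  have h3 : O1 isreal p F Gt < M.
    apply: (O1_lt _ Hq Mp) => i.
    rewrite -(@ltr_pXn2r _ 2) //; last 2 first.
    - by rewrite nnegrE; exact: mulr_ge0 (mulr_ge0 (Hq i) (vnorm_ge0 _)) (vnorm_ge0 _).
    - by rewrite nnegrE; exact: ltW Mp.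
    have := pert_identity (F i) (G' i) a (weight n p i) t.
    rewrite /Gt /= -Hcan -/g => ->.
    have [_ [t12 tK]] := tF i.
    exact: pert_ineq (Hm0 i) (Hm_le i) Mp (Hms i) (HK i) t0 t12 tK.
  by have := le_lt_trans (le_trans h2 h1) h3; rewrite ltxx.
- move=> [Hd HD]; split; first exact: Hd.
  move=> G' HG'.
  apply: le_trans HO_can _; apply: le_trans (HD G' HG') _.
  exact: A1_le_O1.
Qed.
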